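(* Let $k\ge 0$ be an integer and let $G$ be a graph with $\mu_\alpha(G)\leq k$. Then every internal vertex of $G$ is adjacent to at most $k+1$ leaves.
   Context: All graphs are finite and simple. For a graph $H$, $\alpha(H)$ is the maximum size of an independent set, $i(H)$ the minimum size of an inclusion-maximal independent set, and $\mu_\alpha(H)=\alpha(H)-i(H)$. Let $U$ be the set of vertices of $G$ whose connected component is a complete graph. In $G-U$, vertices of degree $1$ are called leaves and the others are called internal vertices. *)

(* Defs.v *)
From mathcomp Require Import all_boot.
Set Implicit Arguments. Unset Strict Implicit. Unset Printing Implicit Defensive.

Section Graph.
Variables (T : finType) (e : rel T).

Definition simple_graph := symmetric e /\ irreflexive e.

Definition independent (S : {set T}) : bool :=
  [forall x in S, forall y in S, ~~ e x y].

Definition maximal_independent (S : {set T}) : bool :=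
  independent S && [forall x, (x \notin S) ==> ~~ independent (x |: S)].

Definition alpha : nat := \max_(S : {set T} | independent S) #|S|.

(* i(G): minimum size of an inclusion-maximal independent set
   (the default #|T| is never attained spuriously since maximal independent
    sets exist and have size <= #|T|) *)
Definition indep_domination : nat :=
  \big[minn/#|T|]_(S : {set T} | maximal_independent S) #|S|.

(* mu_alpha(G) = alpha(G) - i(G)  (note i(G) <= alpha(G)) *)
Definition mu_alpha : nat := alpha - indep_domination.

Definition in_complete_component (x : T) : bool :=
  [forall y, forall z, (connect e x y && connect e x z) ==> ((y == z) || e y z)].

Definition U : {set T} := [set x | in_complete_component x].

Definition degGU (x : T) : nat := #|[set y | (y \notin U) && e x y]|.

Definition leaf (x : T) : bool := (x \notin U) && (degGU x == 1).
Definition internal (x : T) : bool := (x \notin U) && (degGU x != 1).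

End Graph.

(* Main.v *)
Require Import Defs.
From mathcomp Require Import all_boot.
From mathcomp Require Import zify.

Section L.
Variables (T : finType) (e : rel T).
Hypothesis sg : simple_graph e.

Lemma notU_nbr y z : y \notin U e -> e y z -> z \notin U e.
Proof.
case: sg => esym _ yU eyz; apply/negP => zU; move/negP: yU; apply.
rewrite inE; apply/forallP => a; apply/forallP => b; apply/implyP => /andP [ya yb].
move: zU; rewrite inE => /forallP /(_ a) /forallP /(_ b) /implyP; apply.
have zy : connect e z y by apply: connect1; rewrite esym.
by rewrite (connect_trans zy ya) (connect_trans zy yb).
Qed.

Lemma leaf_nbr y v z : leaf e y -> e y v -> v \notin U e -> e y z -> z = v.
Proof.
move=> /andP [yU /eqP d1] eyv vU eyz.
have zU := @notU_nbr y z yU eyz.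
have : #|[set w | (w \notin U e) && e y w]| = 1 by exact: d1.
move/eqP/cards1P => [w Hw].
have : v \in [set w | (w \notin U e) && e y w] by rewrite inE vU eyv.
have : z \in [set w | (w \notin U e) && e y w] by rewrite inE zU eyz.
by rewrite Hw !inE => /eqP -> /eqP ->.
Qed.

End L.

Lemma bigmin_seq (I : eqType) (F : I -> nat) d i (s : seq I) :
  i \in s -> \big[minn/d]_(j <- s) F j <= F i.
Proof.
elim: s => [|a s IH] //; rewrite inE big_cons => /orP [/eqP ->|/IH h].
  exact: geq_minl.
exact: leq_trans (geq_minr _ _) h.
Qed.

Lemma bigmin_le (I : finType) (P : pred I) (F : I -> nat) d i :
  P i -> \big[minn/d]_(j | P j) F j <= F i.
Proof.
move=> Pi; rewrite -big_filter; apply: bigmin_seq.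
by rewrite mem_filter Pi mem_index_enum.
Qed.

Theorem lemma5 (T : finType) (e : rel T) (k : nat) :
  simple_graph e -> mu_alpha e <= k ->
  forall v : T, internal e v ->
    #|[set y | leaf e y && e v y]| <= k.+1.
Proof.
move=> sg hmu v /andP [vU _].
have [esym eirr] := sg.
set L := [set y | leaf e y && e v y].
have indv : independent e [set v].
  apply/forallP => x; apply/implyP; rewrite inE => /eqP ->.
  apply/forallP => y; apply/implyP; rewrite inE => /eqP ->.
  by rewrite eirr.
have Pv : independent e [set v] && (v \in [set v]) by rewrite indv set11.
case: (@arg_maxnP _ [set v] (fun S : {set T} => independent e S && (v \in S)) (fun S : {set T} => #|S|) Pv) => S0 /andP [indS vS] Smax.
have maxS : maximal_independent e S0.
  rewrite /maximal_independent indS /=; apply/forallP => x; apply/implyP => xS.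
  apply/negP => indx.
  suff: #|x |: S0| <= #|S0| by rewrite cardsU1 xS add1n ltnn.
  by apply: Smax; rewrite /= indx setU1r.
have hi : indep_domination e <= #|S0|.
  exact: (@bigmin_le _ (maximal_independent e) (fun S : {set T} => #|S|) _ _ maxS).
set R := S0 :\ v.
have hR : #|S0| = #|R| + 1 by rewrite (cardsD1 v S0) vS addnC.
have Lnb y z : y \in L -> e y z -> z = v.
  rewrite inE => /andP [ly evy] eyz.
  by apply: (@leaf_nbr T e sg y v z ly _ vU eyz); rewrite esym.
have indLR : independent e (L :|: R).
  apply/forallP => x; apply/implyP => xin; apply/forallP => y; apply/implyP => yin.
  apply/negP => exy.
  move: xin yin; rewrite !in_setU !in_setD1 => /orP [xL|/andP [xv xS]] /orP [yL|/andP [yv yS]].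
  - have := Lnb _ _ xL exy => yv; move: yL; rewrite inE yv => /andP [_].
    by rewrite eirr.
  - by move: yv; rewrite (Lnb _ _ xL exy) eqxx.
  - by move: xv; rewrite -esym in exy; rewrite (Lnb _ _ yL exy) eqxx.
  - move/forallP: indS => /(_ x); rewrite xS /= => /forallP /(_ y).
    by rewrite yS exy.
have disj : L :&: R = set0.
  apply/setP => y; rewrite !inE; apply/negP => /andP [/andP [ly evy] /andP [yv yS]].
  move/forallP: indS => /(_ v); rewrite vS /= => /forallP /(_ y).
  by rewrite yS evy.
have ha : #|L :|: R| <= alpha e by exact: (@leq_bigmax_cond _ (independent e) (fun S : {set T} => #|S|) _ indLR).
move: ha; rewrite cardsU disj cards0 subn0 => ha.
move: hmu; rewrite /mu_alpha => hmu.
lia.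
Qed.
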